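(* Consider the single-element, single-slab periodic space-time SBP scheme $$\mathsf D_t\boldsymbol\rho+\tilde{\mathsf D}_x\langle v\boldsymbol g\rangle=-\sigma_a\boldsymbol\rho-\mathsf H_t^{-1}\mathsf t_B\mathsf t_B^\top(\boldsymbol\rho-\boldsymbol\rho(0)),$$ $$\mathsf D_t\boldsymbol g_k+\tfrac{v_k}{\varepsilon}\tilde{\mathsf D}_x\boldsymbol g_k-\tfrac1\varepsilon\langle v\tilde{\mathsf D}_x\boldsymbol g\rangle+\tfrac{v_k}{\varepsilon^2}\tilde{\mathsf D}_x\boldsymbol\rho=-\Big(\tfrac{\sigma_s}{\varepsilon^2}+\sigma_a\Big)\boldsymbol g_k-\mathsf H_t^{-1}\mathsf t_B\mathsf t_B^\top(\boldsymbol g_k-\boldsymbol g_k(0)),\quad k=1,\dots,n_v.$$ This scheme is asymptotic preserving: for fixed discretization, in the formal limit $\varepsilon\to0$ (assuming the discrete derivative approximations remain bounded) it reduces to $$\mathsf D_t\boldsymbol\rho=\tilde{\mathsf D}_x\Big(\tfrac{\langle v^2\rangle}{\sigma_s}\tilde{\mathsf D}_x\boldsymbol\rho\Big)-\sigma_a\boldsymbol\rho-\mathsf H_t^{-1}\mathsf t_B\mathsf t_B^\top(\boldsymbol\rho-\boldsymbol\rho(0)),$$ which is a consistent and stable discretization of the limit equation $\partial_t\rho=\langle v^2\rangle\partial_x\big(\tfrac1{\sigma_s}\partial_x\rho\big)-\sigma_a\rho$.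
   Context: SBP operators: $\bar{\mathsf D}=\bar{\mathsf H}^{-1}\bar{\mathsf Q}$ on nodes $x_0<\dots<x_n$ is a degree-$p$ SBP approximation of $d/dx$ if it differentiates monomials of degree $\le p$ exactly, $\bar{\mathsf H}$ is diagonal symmetric positive definite, and $\bar{\mathsf Q}+\bar{\mathsf Q}^\top=\mathrm{diag}(-1,0,\dots,0,1)=\bar{\boldsymbol t}_R\bar{\boldsymbol t}_R^\top-\bar{\boldsymbol t}_L\bar{\boldsymbol t}_L^\top$ with $\bar{\boldsymbol t}_L,\bar{\boldsymbol t}_R$ the first/last unit vectors. Spatial SBP operator $\bar{\mathsf D}_x=\bar{\mathsf H}_x^{-1}\bar{\mathsf Q}_x$ ($n_x+1$ nodes), temporal $\bar{\mathsf D}_t=\bar{\mathsf H}_t^{-1}\bar{\mathsf Q}_t$ ($n_t+1$ nodes) with first/last unit vectors $\bar{\boldsymbol t}_B,\bar{\boldsymbol t}_T$. $\mathsf D_t=\bar{\mathsf D}_t\otimes\mathsf I_{n_x}$, $\mathsf D_x=\mathsf I_{n_t}\otimes\bar{\mathsf D}_x$, $\mathsf H_t=\bar{\mathsf H}_t\otimes\mathsf I_{n_x}$, $\mathsf H_x=\mathsf I_{n_t}\otimes\bar{\mathsf H}_x$, $\mathsf t_{R/L}=\mathsf I_{n_t}\otimes\bar{\boldsymbol t}_{R/L}$, $\mathsf t_B=\bar{\boldsymbol t}_B\otimes\mathsf I_{n_x}$, where $\mathsf I_{n_x},\mathsf I_{n_t}$ are identities of sizes $n_x+1,n_t+1$.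 $\tilde{\mathsf D}_x=\mathsf D_x-\frac12\mathsf H_x^{-1}\big(\mathsf t_R(\mathsf t_R^\top-\mathsf t_L^\top)-\mathsf t_L(\mathsf t_L^\top-\mathsf t_R^\top)\big)$. Velocity nodes $v_k$, weights $\omega_k$ with $\sum\omega_k=1$, $\sum\omega_kv_k=0$; $\langle\boldsymbol a\rangle=\sum_k\omega_k\boldsymbol a_k$, $\langle v^2\rangle=\sum_k\omega_kv_k^2$. $\varepsilon>0$, $\sigma_s>0$, $\sigma_a\ge0$. A scheme is called asymptotic preserving if, for fixed discretization parameters, in the limit $\varepsilon\to0$ it becomes a consistent (and stable) discretization of the macroscopic limit equation. Stability of the limit scheme means the discrete energy $\frac12\boldsymbol\rho^\top(\bar{\boldsymbol t}_T\bar{\boldsymbol t}_T^\top\otimes\bar{\mathsf H}_x)\boldsymbol\rho$ at the final time is bounded by initial-data terms. *)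

(* Defs.v *)
From HB Require Import structures.
From mathcomp Require Import all_boot all_order all_algebra.
From mathcomp Require Import all_classical all_reals all_analysis.
Set Implicit Arguments. Unset Strict Implicit. Unset Printing Implicit Defensive.
Import Order.TTheory GRing.Theory Num.Theory.
Local Open Scope ring_scope.

(* Grid functions on the space-time mesh
   {t_0<..<t_nt} x {x_0<..<x_nx} are stored as matrices
   X : 'M[R]_(nt.+1, nx.+1), X i j = value at (t_i, x_j).
   The Kronecker operators A (x) B act as  X |-> A *m X *m B^T, so
   D_t = Dbar_t (x) I  is  X |-> Dbar_t *m X,
   D_x = I (x) Dbar_x  is  X |-> X *m Dbar_x^T, etc. *)

Definition e_first (R : nzRingType) (n : nat) : 'cV[R]_n.+1 :=
  \col_i (i == ord0)%:R.
Definition e_last (R : nzRingType) (n : nat) : 'cV[R]_n.+1 :=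
  \col_i (i == ord_max)%:R.

Definition increasing (R : realType) (n : nat) (x : 'I_n.+1 -> R) : Prop :=
  forall i j : 'I_n.+1, (i < j)%N -> x i < x j.

Definition Dop (R : realType) (n : nat) (H Q : 'M[R]_n.+1) : 'M[R]_n.+1 :=
  invmx H *m Q.

Definition is_SBP (R : realType) (n p : nat) (x : 'I_n.+1 -> R)
    (H Q : 'M[R]_n.+1) : Prop :=
  [/\ increasing x,
      (forall i j, i != j -> H i j = 0),
      (forall i, 0 < H i i),
      Q + Q^T = e_last R n *m (e_last R n)^T - e_first R n *m (e_first R n)^T
    & forall m : nat, (m <= p)%N ->
        Dop H Q *m (\col_i (x i ^+ m)) = \col_i (m%:R * x i ^+ m.-1)].

Definition Dtil_bar (R : realType) (n : nat) (H Q : 'M[R]_n.+1) : 'M[R]_n.+1 :=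
  Dop H Q - (1/2) *: (invmx H *m
     (e_last R n *m (e_last R n - e_first R n)^T
      - e_first R n *m (e_first R n - e_last R n)^T)).

Definition DT (R : realType) (nt nx : nat) (Ht Qt : 'M[R]_nt.+1)
    (X : 'M[R]_(nt.+1, nx.+1)) : 'M[R]_(nt.+1, nx.+1) := Dop Ht Qt *m X.

Definition DXt (R : realType) (nt nx : nat) (Hx Qx : 'M[R]_nx.+1)
    (X : 'M[R]_(nt.+1, nx.+1)) : 'M[R]_(nt.+1, nx.+1) := X *m (Dtil_bar Hx Qx)^T.

(* SAT term  H_t^{-1} t_B t_B^T (X - X(0)),  where X(0) = t_B f carries the
   initial datum f : 'rV_(nx.+1) on the bottom time slice. *)
Definition SAT (R : realType) (nt nx : nat) (Ht : 'M[R]_nt.+1)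
    (X : 'M[R]_(nt.+1, nx.+1)) (f : 'rV[R]_nx.+1) : 'M[R]_(nt.+1, nx.+1) :=
  invmx Ht *m (e_first R nt *m ((e_first R nt)^T *m X - f)).

Definition avg_v2 (R : realType) (nv : nat) (v w : 'I_nv -> R) : R :=
  \sum_k w k * v k ^+ 2.

Definition kinetic_scheme (R : realType) (nt nx nv : nat)
    (Ht Qt : 'M[R]_nt.+1) (Hx Qx : 'M[R]_nx.+1) (v w : 'I_nv -> R)
    (sigs siga eps : R) (f : 'rV[R]_nx.+1) (h : 'I_nv -> 'rV[R]_nx.+1)
    (rho : 'M[R]_(nt.+1, nx.+1)) (g : 'I_nv -> 'M[R]_(nt.+1, nx.+1)) : Prop :=
  DT Ht Qt rho + DXt Hx Qx (\sum_k (w k * v k) *: g k)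
    = - (siga *: rho) - SAT Ht rho f
  /\ forall k,
    DT Ht Qt (g k) + (v k / eps) *: DXt Hx Qx (g k)
      - eps^-1 *: (\sum_l (w l * v l) *: DXt Hx Qx (g l))
      + (v k / eps ^+ 2) *: DXt Hx Qx rho
    = - ((sigs / eps ^+ 2 + siga) *: g k) - SAT Ht (g k) (h k).

Definition limit_scheme (R : realType) (nt nx nv : nat)
    (Ht Qt : 'M[R]_nt.+1) (Hx Qx : 'M[R]_nx.+1) (v w : 'I_nv -> R)
    (sigs siga : R) (f : 'rV[R]_nx.+1) (rho : 'M[R]_(nt.+1, nx.+1)) : Prop :=
  DT Ht Qt rho
    = DXt Hx Qx ((avg_v2 v w / sigs) *: DXt Hx Qx rho)
      - siga *: rho - SAT Ht rho f.

Definition final_energy (R : realType) (nt nx : nat) (Hx : 'M[R]_nx.+1)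
    (rho : 'M[R]_(nt.+1, nx.+1)) : R :=
  (1/2) * ((e_last R nt)^T *m rho *m Hx *m rho^T *m e_last R nt) ord0 ord0.

Definition data_energy (R : realType) (nx : nat) (Hx : 'M[R]_nx.+1)
    (f : 'rV[R]_nx.+1) : R := (1/2) * (f *m Hx *m f^T) ord0 ord0.

Definition grid (R : realType) (nt nx : nat) (tn : 'I_nt.+1 -> R)
    (xn : 'I_nx.+1 -> R) (u : R -> R -> R) : 'M[R]_(nt.+1, nx.+1) :=
  \matrix_(i, j) u (tn i) (xn j).

Definition poly2 (R : realType) (pt px : nat) (c : 'I_pt.+1 -> 'I_px.+1 -> R)
    (t x : R) : R :=
  \sum_(m < pt.+1) \sum_(l < px.+1) c m l * t ^+ m * x ^+ l.
Definition poly2_dt (R : realType) (pt px : nat) (c : 'I_pt.+1 -> 'I_px.+1 -> R)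
    (t x : R) : R :=
  \sum_(m < pt.+1) \sum_(l < px.+1) c m l * (m%:R * t ^+ m.-1) * x ^+ l.
Definition poly2_dx (R : realType) (pt px : nat) (c : 'I_pt.+1 -> 'I_px.+1 -> R)
    (t x : R) : R :=
  \sum_(m < pt.+1) \sum_(l < px.+1) c m l * t ^+ m * (l%:R * x ^+ l.-1).
Definition poly2_dxx (R : realType) (pt px : nat) (c : 'I_pt.+1 -> 'I_px.+1 -> R)
    (t x : R) : R :=
  \sum_(m < pt.+1) \sum_(l < px.+1)
     c m l * t ^+ m * (l%:R * (l.-1)%:R * x ^+ l.-2).

(* Main.v *)
Require Import Defs.
From HB Require Import structures.
From mathcomp Require Import all_boot all_order all_algebra.
From mathcomp Require Import all_classical all_reals all_analysis.
From mathcomp Require Import ring lra.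
Import Order.TTheory GRing.Theory Num.Theory numFieldNormedType.Exports.
Local Open Scope classical_set_scope.
Local Open Scope ring_scope.
Set Implicit Arguments. Unset Strict Implicit.

Section Cvg.
Variable R : realType.
Local Notation F := ((0:R)^'+).

Definition ecvg m n (X : R -> 'M[R]_(m,n)) (L : 'M[R]_(m,n)) :=
  forall i j, X e i j @[e --> F] --> L i j.

Lemma cvg_sumR (I : Type) (r : seq I) (P : pred I) (G : I -> R -> R) (L : I -> R) :
  (forall i, G i e @[e --> F] --> L i) ->
  (\sum_(i <- r | P i) G i e) @[e --> F] --> \sum_(i <- r | P i) L i.
Proof.
move=> hG; elim: r => [|a r IH].
  have -> : (fun e => \sum_(i <- [::] | P i) G i e) = fun=> 0.
    by apply/funext => e; rewrite big_nil.
  by rewrite big_nil; exact: cvg_cst.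
have -> : (fun e => \sum_(i <- a :: r | P i) G i e) =
   fun e => (if P a then G a e else 0) + \sum_(i <- r | P i) G i e.
  by apply/funext => e; rewrite big_cons; case: (P a); rewrite ?add0r.
rewrite big_cons.
have -> : (if P a then L a + \sum_(j <- r | P j) L j else \sum_(j <- r | P j) L j)
  = (if P a then L a else 0) + \sum_(j <- r | P j) L j by case: (P a); rewrite ?add0r.
apply: cvgD; last exact: IH.
case: (P a); [exact: hG | exact: cvg_cst].
Qed.

Lemma ecvg_cst m n (A : 'M[R]_(m,n)) : ecvg (fun=> A) A.
Proof. move=> i j; exact: cvg_cst. Qed.

Lemma ecvgD m n (X Y : R -> 'M[R]_(m,n)) XL YL :
  ecvg X XL -> ecvg Y YL -> ecvg (fun e => X e + Y e) (XL + YL).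
Proof.
move=> hX hY i j.
have -> : (fun e => (X e + Y e) i j) = fun e => X e i j + Y e i j.
  by apply/funext => e; rewrite mxE.
rewrite mxE; exact: cvgD.
Qed.

Lemma ecvgN m n (X : R -> 'M[R]_(m,n)) XL :
  ecvg X XL -> ecvg (fun e => - X e) (- XL).
Proof.
move=> hX i j.
have -> : (fun e => (- X e) i j) = fun e => - X e i j.
  by apply/funext => e; rewrite mxE.
rewrite mxE; exact: cvgN.
Qed.

Lemma ecvgB m n (X Y : R -> 'M[R]_(m,n)) XL YL :
  ecvg X XL -> ecvg Y YL -> ecvg (fun e => X e - Y e) (XL - YL).
Proof. by move=> hX hY; apply: ecvgD => //; apply: ecvgN. Qed.

Lemma ecvgZ m n (s : R -> R) (sl : R) (X : R -> 'M[R]_(m,n)) XL :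
  s e @[e --> F] --> sl -> ecvg X XL -> ecvg (fun e => s e *: X e) (sl *: XL).
Proof.
move=> hs hX i j.
have -> : (fun e => (s e *: X e) i j) = fun e => s e * X e i j.
  by apply/funext => e; rewrite mxE.
rewrite mxE; exact: cvgM.
Qed.

Lemma ecvgZc m n (c : R) (X : R -> 'M[R]_(m,n)) XL :
  ecvg X XL -> ecvg (fun e => c *: X e) (c *: XL).
Proof. by apply: ecvgZ; exact: cvg_cst. Qed.

Lemma ecvg_mull m n p (A : 'M[R]_(m,n)) (X : R -> 'M[R]_(n,p)) XL :
  ecvg X XL -> ecvg (fun e => A *m X e) (A *m XL).
Proof.
move=> hX i j.
have -> : (fun e => (A *m X e) i j) = fun e => \sum_k A i k * X e k j.
  by apply/funext => e; rewrite mxE.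
rewrite mxE; apply: cvg_sumR => k; apply: cvgM => //; exact: cvg_cst.
Qed.

Lemma ecvg_mulr m n p (A : 'M[R]_(n,p)) (X : R -> 'M[R]_(m,n)) XL :
  ecvg X XL -> ecvg (fun e => X e *m A) (XL *m A).
Proof.
move=> hX i j.
have -> : (fun e => (X e *m A) i j) = fun e => \sum_k X e i k * A k j.
  by apply/funext => e; rewrite mxE.
rewrite mxE; apply: cvg_sumR => k; apply: cvgM => //; exact: cvg_cst.
Qed.

Lemma ecvg_sum m n nv (c : 'I_nv -> R) (X : R -> 'I_nv -> 'M[R]_(m,n)) XL :
  (forall k, ecvg (fun e => X e k) (XL k)) ->
  ecvg (fun e => \sum_k c k *: X e k) (\sum_k c k *: XL k).
Proof.
move=> hX i j.
have -> : (fun e => (\sum_k c k *: X e k) i j) = fun e => \sum_k c k * X e k i j.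
  by apply/funext => e; rewrite summxE; apply: eq_bigr => k _; rewrite mxE.
rewrite summxE.
have -> : \sum_k (c k *: XL k) i j = \sum_k c k * XL k i j.
  by apply: eq_bigr => k _; rewrite mxE.
apply: cvg_sumR => k; apply: cvgM; [exact: cvg_cst | exact: (hX k i j)].
Qed.

Lemma ecvg_eq m n (X Y : R -> 'M[R]_(m,n)) XL YL :
  (forall e, 0 < e -> X e = Y e) -> ecvg X XL -> ecvg Y YL -> XL = YL.
Proof.
move=> hXY hX hY; apply/matrixP => i j.
have hY' : X e i j @[e --> F] --> YL i j.
  apply: cvg_trans (hY i j); apply: near_eq_cvg.
  near=> e; have he : 0 < e by near: e; exact: nbhs_right_gt.
  by rewrite hXY.
exact: (cvg_unique _ (hX i j) hY').
Unshelve. all: by end_near.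
Qed.

Lemma cvg_e : e @[e --> F] --> (0:R).
Proof. exact: cvg_at_right_filter cvg_id. Qed.

End Cvg.

Section Part1.
Variable R : realType.

Lemma ecvg_DT nt nx (Ht Qt : 'M[R]_nt.+1) (X : R -> 'M[R]_(nt.+1, nx.+1)) XL :
  ecvg X XL -> ecvg (fun e => DT Ht Qt (X e)) (DT Ht Qt XL).
Proof. exact: ecvg_mull. Qed.

Lemma ecvg_DX nt nx (Hx Qx : 'M[R]_nx.+1) (X : R -> 'M[R]_(nt.+1, nx.+1)) XL :
  ecvg X XL -> ecvg (fun e => DXt Hx Qx (X e)) (DXt Hx Qx XL).
Proof. exact: ecvg_mulr. Qed.

Lemma ecvg_SAT nt nx (Ht : 'M[R]_nt.+1) (X : R -> 'M[R]_(nt.+1, nx.+1)) XL f :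
  ecvg X XL -> ecvg (fun e => SAT Ht (X e) f) (SAT Ht XL f).
Proof.
move=> hX; apply: ecvg_mull; apply: ecvg_mull; apply: ecvgB; last exact: ecvg_cst.
exact: ecvg_mull.
Qed.

Lemma cvg_e2 : e ^+ 2 @[e --> (0:R)^'+] --> (0:R).
Proof.
have -> : (fun e : R => e ^+ 2) = fun e => e * e by apply/funext => e; rewrite expr2.
have := cvgM (@cvg_e R) (@cvg_e R); rewrite mulr0; exact.
Qed.

Lemma DXtZ nt nx (Hx Qx : 'M[R]_nx.+1) (c : R) (X : 'M[R]_(nt.+1, nx.+1)) :
  DXt Hx Qx (c *: X) = c *: DXt Hx Qx X.
Proof. by rewrite /DXt scalemxAl. Qed.

Lemma part1 (nt nx nv : nat) (Ht Qt : 'M[R]_nt.+1) (Hx Qx : 'M[R]_nx.+1)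
    (v w : 'I_nv -> R) (sigs siga : R) : 0 < sigs ->
   (forall (f : 'rV[R]_nx.+1) (h : 'I_nv -> 'rV[R]_nx.+1)
      (rho : R -> 'M[R]_(nt.+1, nx.+1)) (g : R -> 'I_nv -> 'M[R]_(nt.+1, nx.+1))
      (rhoL : 'M[R]_(nt.+1, nx.+1)) (gL : 'I_nv -> 'M[R]_(nt.+1, nx.+1)),
      (forall eps, 0 < eps ->
         kinetic_scheme Ht Qt Hx Qx v w sigs siga eps f h (rho eps) (g eps)) ->
      (forall i j, rho e i j @[e --> (0:R)^'+] --> rhoL i j) ->
      (forall k i j, g e k i j @[e --> (0:R)^'+] --> gL k i j) ->
      limit_scheme Ht Qt Hx Qx v w sigs siga f rhoL).
Proof.
move=> hs f h rho g rhoL gL hk hr hg.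
have hgk : forall k, ecvg (fun e => g e k) (gL k) by move=> k i j; exact: hg.
have hgL : forall k, gL k = - (v k / sigs) *: DXt Hx Qx rhoL.
  move=> k.
  have c1 : (e * v k) @[e --> (0:R)^'+] --> 0 * v k.
    apply: cvgM; [exact: cvg_e | exact: cvg_cst].
  have c2 : (sigs + e^+2 * siga) @[e --> (0:R)^'+] --> sigs + 0 * siga.
    apply: cvgD; first exact: cvg_cst.
    apply: cvgM; [exact: cvg_e2 | exact: cvg_cst].
  pose X := (fun e => e^+2 *: DT Ht Qt (g e k) + (e * v k) *: DXt Hx Qx (g e k)
       - e *: (\sum_l (w l * v l) *: DXt Hx Qx (g e l)) + v k *: DXt Hx Qx (rho e)).
  pose Y := (fun e => - ((sigs + e^+2 * siga) *: g e k) - e^+2 *: SAT Ht (g e k) (h k)).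
  have hXY : forall e, 0 < e -> X e = Y e.
    move=> e he; have [_ hg1] := hk e he.
    have e0 : e != 0 by rewrite gt_eqF.
    have := congr1 (fun M => e^+2 *: M) (hg1 k).
    rewrite /X /Y /= !scalerDr !scalerN !scalerA.
    have -> : e^+2 * (v k / e) = e * v k by field.
    have -> : e^+2 * e^-1 = e by field.
    have -> : e^+2 * (v k / e^+2) = v k by field.
    by have -> : e^+2 * (sigs / e^+2 + siga) = sigs + e^+2 * siga by field.
  have E := ecvg_eq hXY
    (ecvgD (ecvgB (ecvgD (ecvgZ cvg_e2 (ecvg_DT (hgk k)))
                         (ecvgZ c1 (ecvg_DX (hgk k))))
                  (ecvgZ (@cvg_e R) (ecvg_sum (fun l => ecvg_DX (hgk l)))))
           (ecvgZc (ecvg_DX hr)))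
    (ecvgB (ecvgN (ecvgZ c2 (hgk k)))
           (ecvgZ cvg_e2 (ecvg_SAT (hgk k)))).
  move: E; rewrite !(scale0r, mul0r, add0r, subr0, sub0r, addr0, oppr0) => E.
  rewrite mulrC -mulNr -scalerA E scalerN scaleNr opprK scalerA mulVf ?scale1r //.
  by rewrite gt_eqF.
have E := @ecvg_eq _ _ _
   (fun e => DT Ht Qt (rho e) + DXt Hx Qx (\sum_k (w k * v k) *: g e k))
   (fun e => - (siga *: rho e) - SAT Ht (rho e) f) _ _
   (fun e he => proj1 (hk e he))
   (ecvgD (ecvg_DT hr) (ecvg_DX (ecvg_sum hgk)))
   (ecvgB (ecvgN (ecvgZc hr)) (ecvg_SAT hr)).
have S : \sum_k (w k * v k) *: gL k = - (avg_v2 v w / sigs) *: DXt Hx Qx rhoL.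
  under eq_bigr do rewrite hgL scalerA.
  rewrite -scaler_suml; congr (_ *: _).
  rewrite /avg_v2 mulr_suml -sumrN; apply: eq_bigr => k _.
  by field; rewrite gt_eqF.
move: E; rewrite S DXtZ => E.
rewrite /limit_scheme DXtZ.
rewrite -(addrK (- (avg_v2 v w / sigs) *: DXt Hx Qx (DXt Hx Qx rhoL)) (DT Ht Qt rhoL)).
by rewrite E scaleNr opprK addrC addrA.
Qed.
End Part1.

Section Part2.
Variable R : realType.



Lemma sbp_exact n p (x : 'I_n.+1 -> R) H Q : is_SBP p x H Q ->
  forall l, (l <= p)%N -> forall j, \sum_k Dop H Q j k * x k ^+ l = l%:R * x j ^+ l.-1.
Proof.
case=> _ _ _ _ hD l hl j.
have := congr1 (fun M : 'M[R]_(n.+1,1) => M j ord0) (hD l hl).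
rewrite /= !mxE => <-; apply: eq_bigr => k _; by rewrite ?mxE.
Qed.

Lemma mul_elast m n (X : 'M[R]_(m, n.+1)) : X *m e_last R n = \col_i X i ord_max.
Proof.
apply/matrixP => i j; rewrite !mxE (bigD1 ord_max) //= !mxE eqxx mulr1 big1 ?addr0 //.
by move=> k /negbTE hk; rewrite mxE hk mulr0.
Qed.

Lemma mul_efirst m n (X : 'M[R]_(m, n.+1)) : X *m e_first R n = \col_i X i ord0.
Proof.
apply/matrixP => i j; rewrite !mxE (bigD1 ord0) //= !mxE eqxx mulr1 big1 ?addr0 //.
by move=> k /negbTE hk; rewrite mxE hk mulr0.
Qed.

Lemma efirstT_mul m n (X : 'M[R]_(n.+1, m)) : (e_first R n)^T *m X = \row_j X ord0 j.
Proof.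
apply/matrixP => i j; rewrite !mxE (bigD1 ord0) //= !mxE eqxx mul1r big1 ?addr0 //.
by move=> k /negbTE hk; rewrite !mxE hk mul0r.
Qed.

Lemma Dtil_periodic m n (H Q : 'M[R]_n.+1) (X : 'M[R]_(m, n.+1)) :
  (forall i, X i ord0 = X i ord_max) ->
  X *m (Dtil_bar H Q)^T = X *m (Dop H Q)^T.
Proof.
move=> hX.
have h0 : X *m (e_last R n - e_first R n) = 0.
  rewrite mulmxBr mul_elast mul_efirst; apply/matrixP => i j; rewrite !mxE hX.
  by rewrite subrr.
have tB : forall p q (A B : 'M[R]_(p,q)), (A - B)^T = A^T - B^T.
  by move=> p q A B; apply/matrixP=> i j; rewrite !mxE.
have tZ : forall p q (c : R) (A : 'M[R]_(p,q)), (c *: A)^T = c *: A^T.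
  by move=> p q c A; apply/matrixP=> i j; rewrite !mxE.
have h1 : X *m (e_first R n - e_last R n) = 0.
  by rewrite -opprB mulmxN h0 oppr0.
have hK : X *m (e_last R n *m (e_last R n - e_first R n)^T
      - e_first R n *m (e_first R n - e_last R n)^T)^T = 0.
  rewrite (tB _ _ (e_last R n *m _)) !trmx_mul !trmxK mulmxBr !mulmxA h0 h1.
  by rewrite !mul0mx subrr.
rewrite /Dtil_bar tB mulmxBr tZ -scalemxAr [(invmx H *m (_ - _))^T]trmx_mul.
by rewrite mulmxA hK mul0mx scaler0 subr0.
Qed.

Lemma Dt_grid nt nx pt px (tn : 'I_nt.+1 -> R) (xn : 'I_nx.+1 -> R) Ht Qt
  (c : 'I_pt.+1 -> 'I_px.+1 -> R) : is_SBP pt tn Ht Qt ->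
  DT Ht Qt (grid tn xn (poly2 c)) = grid tn xn (poly2_dt c).
Proof.
move=> hT; have := sbp_exact hT; rewrite /DT; move: (Dop Ht Qt) => D hD.
apply/matrixP => i j; rewrite /grid [RHS]mxE [LHS]mxE /poly2_dt.
transitivity (\sum_k \sum_(m < pt.+1) \sum_(l < px.+1)
     D i k * (c m l * tn k ^+ m * xn j ^+ l)).
  apply: eq_bigr => k _; rewrite mxE /poly2 mulr_sumr; apply: eq_bigr => m _.
  by rewrite mulr_sumr.
rewrite exchange_big; apply: eq_bigr => m _; rewrite exchange_big.
apply: eq_bigr => l _.
rewrite -(hD _ (leq_ord m)) mulr_sumr mulr_suml; apply: eq_bigr => k _.
ring.
Qed.

Lemma Dx_grid nt nx px A B (tn : 'I_nt.+1 -> R) (xn : 'I_nx.+1 -> R) Hx Qx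
  (a : 'I_A -> 'I_B -> R -> R) (ex : 'I_B -> nat) : is_SBP px xn Hx Qx ->
  (forall l, (ex l <= px)%N) ->
  (\matrix_(i, j) \sum_m \sum_l a m l (tn i) * xn j ^+ ex l) *m (Dop Hx Qx)^T
  = \matrix_(i, j) \sum_m \sum_l a m l (tn i) * ((ex l)%:R * xn j ^+ (ex l).-1).
Proof.
move=> hX hex; have := sbp_exact hX; move: (Dop Hx Qx) => D hD.
apply/matrixP => i j; rewrite [LHS]mxE [RHS]mxE.
transitivity (\sum_k \sum_m \sum_l
     a m l (tn i) * (xn k ^+ ex l * D j k)).
  apply: eq_bigr => k _; rewrite !mxE mulr_suml; apply: eq_bigr => m _.
  rewrite mulr_suml; apply: eq_bigr => l _; ring.
rewrite exchange_big; apply: eq_bigr => m _; rewrite exchange_big.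
apply: eq_bigr => l _.
rewrite -(hD _ (hex l)) mulr_sumr; apply: eq_bigr => k _.
ring.
Qed.

Lemma part2 nt nx pt px nv (tn : 'I_nt.+1 -> R) (xn : 'I_nx.+1 -> R)
    (Ht Qt : 'M[R]_nt.+1) (Hx Qx : 'M[R]_nx.+1)
    (v w : 'I_nv -> R) (sigs siga : R) :
  is_SBP pt tn Ht Qt -> is_SBP px xn Hx Qx ->
   (forall c : 'I_pt.+1 -> 'I_px.+1 -> R,
      (forall t, poly2 c t (xn ord0) = poly2 c t (xn ord_max)) ->
      (forall t, poly2_dx c t (xn ord0) = poly2_dx c t (xn ord_max)) ->
      let U := grid tn xn (poly2 c) in
      DT Ht Qt U - DXt Hx Qx ((avg_v2 v w / sigs) *: DXt Hx Qx U)
        + siga *: U + SAT Ht U (\row_j poly2 c (tn ord0) (xn j))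
      = grid tn xn (fun t x => poly2_dt c t x
                     - avg_v2 v w * (sigs^-1 * poly2_dxx c t x)
                     + siga * poly2 c t x)).
Proof.
move=> hT hX c p1 p2 U.
have hU : DXt Hx Qx U = grid tn xn (poly2_dx c).
  rewrite /DXt Dtil_periodic; last by move=> i; rewrite !mxE p1.
  exact: (@Dx_grid _ _ _ _ _ tn xn Hx Qx (fun m l t => c m l * t ^+ m) (fun l => nat_of_ord l)
            hX (fun l => leq_ord l)).
have hU2 : DXt Hx Qx (grid tn xn (poly2_dx c)) = \matrix_(i, j) \sum_m \sum_l
     (c m l * tn i ^+ m * (nat_of_ord l)%:R) * (((nat_of_ord l).-1)%:R * xn j ^+ (nat_of_ord l).-1.-1).
  rewrite /DXt Dtil_periodic; last by move=> i; rewrite !mxE p2.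
  have -> : grid tn xn (poly2_dx c) = \matrix_(i,j) \sum_m \sum_l
       (c m l * tn i ^+ m * (nat_of_ord l)%:R) * xn j ^+ (nat_of_ord l).-1.
    apply/matrixP => i j; rewrite !mxE /poly2_dx; apply: eq_bigr => m _.
    by apply: eq_bigr => l _; rewrite mulrA.
  exact: (@Dx_grid _ _ _ _ _ tn xn Hx Qx (fun m l t => c m l * t ^+ m * (nat_of_ord l)%:R)
            (fun l => (nat_of_ord l).-1) hX
            (fun l => leq_trans (leq_pred l) (leq_ord l))).
have hS : SAT Ht U (\row_j poly2 c (tn ord0) (xn j)) = 0.
  rewrite /SAT efirstT_mul.
  have -> : \row_j U ord0 j = \row_j poly2 c (tn ord0) (xn j).
    by apply/matrixP => i j; rewrite !mxE.
  by rewrite subrr !mulmx0.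
have hDT : DT Ht Qt U = grid tn xn (poly2_dt c) by apply: Dt_grid; exact: hT.
rewrite hDT DXtZ hU hU2 hS addr0; apply/matrixP => i j; rewrite !mxE.
have -> : \sum_(m < pt.+1) \sum_(l < px.+1) c m l * tn i ^+ m * (nat_of_ord l)%:R *
     (((nat_of_ord l).-1)%:R * xn j ^+ (nat_of_ord l).-1.-1) = poly2_dxx c (tn i) (xn j).
  by apply: eq_bigr => m _; apply: eq_bigr => l _; ring.
ring.
Qed.

End Part2.

Section Part3.
Variable R : realType.

Lemma trB (V : zmodType) n (A B : 'M[V]_n) : \tr (A - B) = \tr A - \tr B.
Proof. by rewrite raddfB. Qed.

Lemma trN (V : zmodType) n (A : 'M[V]_n) : \tr (- A) = - \tr A.
Proof. by rewrite raddfN. Qed.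

Lemma tr1 (A : 'M[R]_1) : \tr A = A ord0 ord0.
Proof. by rewrite /mxtrace big_ord1. Qed.

Lemma diagE n (P : 'M[R]_n) : (forall i j, i != j -> P i j = 0) ->
  P = diag_mx (\row_i P i i).
Proof.
move=> hP; apply/matrixP => i j; rewrite !mxE.
by case: eqVneq => [->|ne]; rewrite ?mulr1n ?mulr0n // hP.
Qed.

Lemma diag_sym n (P : 'M[R]_n) : (forall i j, i != j -> P i j = 0) -> P^T = P.
Proof. by move=> hP; rewrite (diagE hP) tr_diag_mx. Qed.

Lemma diag_unit n (P : 'M[R]_n) : (forall i j, i != j -> P i j = 0) ->
  (forall i, 0 < P i i) -> P \in unitmx.
Proof.
move=> hP hpos; rewrite (diagE hP) unitmxE det_diag unitfE gt_eqF //.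
by apply: prodr_gt0 => i _; rewrite mxE.
Qed.

Lemma tr_pos n m (P : 'M[R]_n) (Q : 'M[R]_m) (Y : 'M[R]_(n,m)) :
  (forall i j, i != j -> P i j = 0) -> (forall i, 0 <= P i i) ->
  (forall i j, i != j -> Q i j = 0) -> (forall i, 0 <= Q i i) ->
  0 <= \tr (P *m Y *m Q *m Y^T).
Proof.
move=> hP pP hQ pQ; rewrite (diagE hP) (diagE hQ) mul_diag_mx mul_mx_diag.
rewrite /mxtrace; apply: sumr_ge0 => i _; rewrite !mxE; apply: sumr_ge0 => j _.
rewrite !mxE.
have -> : P i i * Y i j * Q j j * Y i j = (P i i * Q j j) * (Y i j ^+ 2) by ring.
by apply: mulr_ge0; [apply: mulr_ge0 | apply: sqr_ge0].
Qed.

Lemma part3 nt nx pt px nv (tn : 'I_nt.+1 -> R) (xn : 'I_nx.+1 -> R)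
    (Ht Qt : 'M[R]_nt.+1) (Hx Qx : 'M[R]_nx.+1)
    (v w : 'I_nv -> R) (sigs siga : R) :
  is_SBP pt tn Ht Qt -> is_SBP px xn Hx Qx ->
  (forall k, 0 < w k) -> 0 < sigs -> 0 <= siga ->
   (forall (f : 'rV[R]_nx.+1) (rho : 'M[R]_(nt.+1, nx.+1)),
      limit_scheme Ht Qt Hx Qx v w sigs siga f rho ->
      final_energy Hx rho <= data_energy Hx f).
Proof.
move=> hT hX hw hs hsa f r hlim.
have ha : 0 <= avg_v2 v w / sigs.
  apply: divr_ge0; last exact: ltW.
  by apply: sumr_ge0 => k _; apply: mulr_ge0; [apply: ltW | apply: sqr_ge0].
move: hT hX hlim ha; rewrite /limit_scheme /final_energy /data_energy.
set a := avg_v2 v w / sigs.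
set D := Dtil_bar Hx Qx.
set B := e_first R nt.
set T := e_last R nt.
case=> _ offT posT QT _ [_ offX posX QX _] hlim ha.
have uT := diag_unit offT posT.
have sX := diag_sym offX.
have skew : D^T *m Hx = - (Hx *m D).
  have hS : Hx *m D = Qx - (1/2) *: (e_last R nx *m (e_last R nx - e_first R nx)^T
              - e_first R nx *m (e_first R nx - e_last R nx)^T).
    by rewrite /D /Dtil_bar /Dop mulmxBr -scalemxAr !mulKVmx // diag_unit.
  rewrite -{1}sX -trmx_mul hS; apply/matrixP => i j.
  have := congr1 (fun M : 'M[R]_nx.+1 => M i j) QX.
  rewrite !mxE !big_ord1 !mxE => q.
  lra.
have eq1 : Qt *m r = a *: (Ht *m (r *m D^T *m D^T)) - siga *: (Ht *m r)
                     - B *m (B^T *m r - f).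
  have := congr1 (mulmx Ht) hlim.
  rewrite /DT /Dop /DXt /SAT -(mulmxA (invmx Ht)) mulKVmx // => ->.
  by rewrite !mulmxBr !mulKVmx // -scalemxAl -!scalemxAr.
pose M := r *m Hx *m r^T.
have Msym : M^T = M by rewrite /M !trmx_mul trmxK sX mulmxA.
have f1 : \tr (Qt *m M) *+ 2 = \tr (T^T *m M *m T) - \tr (B^T *m M *m B).
  have e : \tr (Qt^T *m M) = \tr (Qt *m M).
    by rewrite -[LHS]mxtrace_tr trmx_mul trmxK Msym mxtrace_mulC.
  rewrite mulr2n -{2}e -mxtraceD -mulmxDl QT -/T -/B mulmxBl trB -!mulmxA.
  by rewrite (mxtrace_mulC T) (mxtrace_mulC B) !mulmxA.
have [Y eY] : exists Y, Y = r *m D^T by eexists.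
have [b eb] : exists b, b = B^T *m r by eexists.
have hbT : r^T *m B = b^T by rewrite eb trmx_mul trmxK.
have t1 : Ht *m (r *m D^T *m D^T) *m Hx *m r^T = - (Ht *m Y *m Hx *m Y^T).
  rewrite eY trmx_mul trmxK !mulmxA.
  by rewrite -(mulmxA (Ht *m r *m D^T) D^T Hx) skew mulmxN mulNmx !mulmxA.
have t3 : \tr (B *m (b - f) *m Hx *m r^T) =
          \tr (b *m Hx *m b^T) - \tr (f *m Hx *m b^T).
  have -> : \tr (B *m (b - f) *m Hx *m r^T) = \tr ((b - f) *m Hx *m (r^T *m B)).
    by rewrite -!mulmxA mxtrace_mulC !mulmxA.
  by rewrite hbT !mulmxBl trB.
have f2 : \tr (Qt *m M) = - (a * \tr (Ht *m Y *m Hx *m Y^T))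
     - siga * \tr (Ht *m r *m Hx *m r^T)
     - (\tr (b *m Hx *m b^T) - \tr (f *m Hx *m b^T)).
  rewrite /M !mulmxA eq1 !mulmxBl !trB -!scalemxAl !mxtraceZ -eb t1 -t3.
  by rewrite trN mulrN.
have f4 : 0 <= \tr (b *m Hx *m b^T) - \tr (f *m Hx *m b^T) *+ 2 + \tr (f *m Hx *m f^T).
  have o1 : forall i j : 'I_1, i != j -> (1%:M : 'M[R]_1) i j = 0.
    by move=> i j /negbTE h; rewrite mxE h mulr0n.
  have o2 : forall i : 'I_1, 0 <= (1%:M : 'M[R]_1) i i.
    by move=> i; rewrite mxE eqxx mulr1n ler01.
  have := @tr_pos 1 _ 1%:M Hx (b - f) o1 o2 offX (fun i => ltW (posX i)).
  have -> : (b - f)^T = b^T - f^T by apply/matrixP => i j; rewrite !mxE.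
  rewrite mul1mx !mulmxBl !mulmxBr !trB.
  have -> : \tr (b *m Hx *m f^T) = \tr (f *m Hx *m b^T).
    by rewrite -[LHS]mxtrace_tr !trmx_mul trmxK sX mulmxA.
  rewrite mulr2n; lra.
have p1 : 0 <= a * \tr (Ht *m Y *m Hx *m Y^T).
  apply: mulr_ge0 => //; apply: tr_pos => // i; exact: ltW.
have p2 : 0 <= siga * \tr (Ht *m r *m Hx *m r^T).
  apply: mulr_ge0 => //; apply: tr_pos => // i; exact: ltW.
have eT : \tr (T^T *m r *m Hx *m r^T *m T) = \tr (T^T *m M *m T).
  by rewrite /M !mulmxA.
have eB : \tr (B^T *m M *m B) = \tr (b *m Hx *m b^T).
  by rewrite /M -hbT eb !mulmxA.
rewrite -!tr1 eT.
move: f1 f4; rewrite f2 eB mulr2n.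
lra.
Qed.

End Part3.

Theorem theorem3p5 (R : realType) (nt nx pt px nv : nat)
    (tn : 'I_nt.+1 -> R) (xn : 'I_nx.+1 -> R)
    (Ht Qt : 'M[R]_nt.+1) (Hx Qx : 'M[R]_nx.+1)
    (v w : 'I_nv -> R) (sigs siga : R) :
  is_SBP pt tn Ht Qt -> is_SBP px xn Hx Qx ->
  (forall k, 0 < w k) -> \sum_k w k = 1 -> \sum_k w k * v k = 0 ->
  0 < sigs -> 0 <= siga ->
  [/\
   (* (1) asymptotic limit eps -> 0 of the kinetic scheme is the limit scheme *)
   (forall (f : 'rV[R]_nx.+1) (h : 'I_nv -> 'rV[R]_nx.+1)
      (rho : R -> 'M[R]_(nt.+1, nx.+1)) (g : R -> 'I_nv -> 'M[R]_(nt.+1, nx.+1))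
      (rhoL : 'M[R]_(nt.+1, nx.+1)) (gL : 'I_nv -> 'M[R]_(nt.+1, nx.+1)),
      (forall eps, 0 < eps ->
         kinetic_scheme Ht Qt Hx Qx v w sigs siga eps f h (rho eps) (g eps)) ->
      (forall i j, rho e i j @[e --> (0:R)^'+] --> rhoL i j) ->
      (forall k i j, g e k i j @[e --> (0:R)^'+] --> gL k i j) ->
      limit_scheme Ht Qt Hx Qx v w sigs siga f rhoL),
   (* (2) consistency of the limit scheme with
          d_t rho = <v^2> d_x (1/sigs d_x rho) - siga rho  (periodic in x):
          zero truncation error on periodic polynomial data *)
   (forall c : 'I_pt.+1 -> 'I_px.+1 -> R,
      (forall t, poly2 c t (xn ord0) = poly2 c t (xn ord_max)) ->
      (forall t, poly2_dx c t (xn ord0) = poly2_dx c t (xn ord_max)) ->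
      let U := grid tn xn (poly2 c) in
      DT Ht Qt U - DXt Hx Qx ((avg_v2 v w / sigs) *: DXt Hx Qx U)
        + siga *: U + SAT Ht U (\row_j poly2 c (tn ord0) (xn j))
      = grid tn xn (fun t x => poly2_dt c t x
                     - avg_v2 v w * (sigs^-1 * poly2_dxx c t x)
                     + siga * poly2 c t x))
   &
   (* (3) energy stability of the limit scheme *)
   (forall (f : 'rV[R]_nx.+1) (rho : 'M[R]_(nt.+1, nx.+1)),
      limit_scheme Ht Qt Hx Qx v w sigs siga f rho ->
      final_energy Hx rho <= data_energy Hx f)].
Proof.
move=> hT hX hw h1 h0 hs hsa; split.
- exact: part1 hs.
- exact: part2 hT hX.
- exact: part3 hT hX hw hs hsa.
Qed.
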